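(* Let $G_0^*$ be a $k$-uniform hypergraph on $n$ vertices and let $\{U_1,\dots,U_t\}$ be a partition of its vertex set into $t$ sets of size $p$ (so $n=pt$). Order the vertices of $G_0^*$ so that $U_i$ consists of the $((i-1)p+1)$-th through the $(ip)$-th vertices, and compute $A(G_0^* )$ in this order. For $i=1,\dots,t$ let $G_i^*$ be a $(k,r)$-regular hypergraph on $m\ge 2$ vertices (the same $k$, $r$, $m$ for all $i$). Put $$a=\begin{cases} p\left(\binom{p+m-2}{k-2}-\binom{p-2}{k-2}\right) & \text{if } p\ge 2,\\ 0 & \text{if } p=1,\end{cases}\qquad b=\binom{p+m-2}{k-2},\qquad c=\binom{p+m-2}{k-2}-\binom{m-2}{k-2},$$ and $Y_i=A(G_i^* )+c(J_m-I_m)$. Let $G^*=G_0^*\odot_p^t G_i^*$ be the generalized corona. Then for every real $\lambda$ such that $Y_i-\lambda I_m$ is invertible for all $i=1,\dots,t$, $$P_{A(G^* )}(\lambda)=\Big(\prod_{i=1}^t \det(Y_i-\lambda I_m)\Big)^p\,\det\!\Big(A(G_0^* )+I_t\otimes\Big(\big(a-\tfrac{b^2pm}{r(k-1)+c(m-1)-\lambda}\big)J_p-(a+\lambda)I_p\Big)\Big).$$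
   Context: All hypergraphs are finite and simple: a hypergraph $G^*=(V,E)$ consists of a finite vertex set $V$ and a set $E$ of subsets of $V$ (hyperedges), each of size at least $2$. It is $k$-uniform if every hyperedge has exactly $k$ elements, and $(k,r)$-regular if it is $k$-uniform and every vertex lies in exactly $r$ hyperedges. For a hypergraph with vertices $v_1,\dots,v_n$, the adjacency matrix $A(G^* )$ is the $n\times n$ matrix whose $(i,j)$ entry, for $i\ne j$, is the number of hyperedges containing both $v_i$ and $v_j$, and whose diagonal entries are $0$. $J_n$ (resp. $J_{a,b}$) is the all-ones $n\times n$ (resp. $a\times b$) matrix, $I_n$ the identity matrix, $\otimes$ the Kronecker product. For a square matrix $M$, $P_M(\lambda)=\det(M-\lambda I)$. Binomial coefficients $\binom{x}{y}$ with integers $x\ge 0$ and $y$ are $0$ when $y<0$ or $y>x$. Generalized corona: let $G_0^*$ be a $k$-uniform hypergraph with vertex set $V_0$, $\{U_1,\dots,U_t\}$ a partition of $V_0$ with $|U_i|=p$, and $G_1^*,\dots,G_t^*$ $k$-uniform hypergraphs. The generalized corona $G_0^*\odot_p^t G_i^*$ is the $k$-uniform hypergraph obtained as follows: for each $i$ take $p$ copies $G_i^{*(1)},\dots,G_i^{*(p)}$ of $G_i^*$, all copies pairwise vertex-disjoint and disjoint from $V_0$. The vertex set is $V_0$ together with the vertices of all copies; the hyperedges are the hyperedges of $G_0^*$, the hyperedges of every copy, and, for every $i\in\{1,\dots,t\}$ and $j\in\{1,\dots,p\}$, every $k$-element subset of $U_i\cup V(G_i^{*(j)})$ that meets both $U_i$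 and $V(G_i^{*(j)})$. *)

(* Defs.v *)
From HB Require Import structures.
From mathcomp Require Import all_boot all_order all_algebra.
From mathcomp Require Export mxtens.
Set Implicit Arguments. Unset Strict Implicit. Unset Printing Implicit Defensive.
Import Order.TTheory GRing.Theory Num.Theory.
Local Open Scope ring_scope.

Definition is_hypergraph (V : finType) (E : {set {set V}}) : Prop :=
  forall e, e \in E -> (2 <= #|e|)%N.

Definition uniform (V : finType) (k : nat) (E : {set {set V}}) : Prop :=
  forall e, e \in E -> #|e| = k.

Definition regular (V : finType) (k r : nat) (E : {set {set V}}) : Prop :=
  uniform k E /\ forall v : V, #|[set e in E | v \in e]| = r.

Definition adj (V : finType) (E : {set {set V}}) (u v : V) : nat :=
  if u == v then 0%N else #|[set e in E | (u \in e) && (v \in e)]|.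

Definition adjmx_ord (R : pzRingType) (n : nat) (E : {set {set 'I_n}}) : 'M[R]_n :=
  \matrix_(i < n, j < n) (adj E i j)%:R.

Definition adjmx (R : pzRingType) (V : finType) (E : {set {set V}}) : 'M[R]_#|V| :=
  \matrix_(i, j) (adj E (enum_val i) (enum_val j))%:R.

Definition charP (R : comPzRingType) (n : nat) (M : 'M[R]_n) (l : R) : R :=
  \det (M - l%:M).

(* binomial coefficient C(x, k-2) with the convention C(x, y) = 0 for y < 0 *)
Definition binm2 (x k : nat) : nat := if (k < 2)%N then 0%N else 'C(x, k - 2).

(* G0 lives on 'I_(t*p); the block U_i is { v | v %/ p = i }, i.e. the
   ((i-1)p+1)-th to (ip)-th vertices.
   Vertex set: inl v for v a vertex of G0, inr (i, j, x) for vertex x of the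
   j-th copy of G_i. *)
Definition corona_vertex (t p m : nat) := ('I_(t * p) + ('I_t * 'I_p * 'I_m))%type.

Definition block (t p m : nat) (i : 'I_t) : {set corona_vertex t p m} :=
  [set inl v | v : 'I_(t * p) & (v %/ p)%N == i].

Definition copy_vertices (t p m : nat) (i : 'I_t) (j : 'I_p)
  : {set corona_vertex t p m} := [set inr (i, j, x) | x : 'I_m].

Definition corona (k t p m : nat) (E0 : {set {set 'I_(t * p)}})
  (G : 'I_t -> {set {set 'I_m}}) : {set {set corona_vertex t p m}} :=
  [set (@inl _ ('I_t * 'I_p * 'I_m)%type) @: e | e : {set 'I_(t * p)} in E0]
  :|: (\bigcup_(i < t) \bigcup_(j < p)
         [set (fun x : 'I_m => @inr 'I_(t * p) _ (i, j, x)) @: e | e : {set 'I_m} in G i])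
  :|: (\bigcup_(i < t) \bigcup_(j < p)
         [set S : {set corona_vertex t p m} |
            [&& #|S| == k, S \subset @block t p m i :|: @copy_vertices t p m i j,
                S :&: @block t p m i != set0 & S :&: @copy_vertices t p m i j != set0]]).

Arguments corona k {t p} m E0 G.
Arguments block {t p} m i.
Arguments copy_vertices {t p m} i j.

(* Main.v *)
Require Import Defs.
From HB Require Import structures.
From mathcomp Require Import all_boot all_order all_algebra.
From mathcomp Require Import mxtens.
From mathcomp Require Import fingroup perm.
From mathcomp Require Import zify ring.
Set Implicit Arguments. Unset Strict Implicit. Unset Printing Implicit Defensive.
Import Order.TTheory GRing.Theory Num.Theory.
Local Open Scope ring_scope.

Lemma det_perm_conj (R : comPzRingType) n (s : 'S_n) (A : 'M[R]_n) :
  \det (\matrix_(i, j) A (s i) (s j)) = \det A.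
Proof.
have -> : \matrix_(i, j) A (s i) (s j) = row_perm s (col_perm s A).
  by apply/matrixP => i j; rewrite !mxE.
rewrite row_permE col_permE !det_mulmx mulrC -mulrA -det_mulmx -perm_mxM.
by rewrite mulVg perm_mx1 det1 mulr1.
Qed.

Lemma det_reorder (R : comPzRingType) (V : finType) N (f : 'I_N -> V)
  (F : V -> V -> R) : injective f -> N = #|V| ->
  \det (\matrix_(i < #|V|, j < #|V|) F (enum_val i) (enum_val j)) =
  \det (\matrix_(i < N, j < N) F (f i) (f j)).
Proof.
move=> finj eN; subst N.
have ginj : injective (fun i => enum_rank (f i)).
  by move=> i j /enum_rank_inj /finj.
rewrite -(det_perm_conj (perm ginj)); congr (\det _).
by apply/matrixP => i j; rewrite !mxE !permE !enum_rankK.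
Qed.

Lemma det_cast (R : comPzRingType) a b (e : a = b) (A : 'M[R]_a) :
  \det (castmx (e, e) A) = \det A.
Proof. by subst b; rewrite castmx_id. Qed.

Lemma det_mxdiag (R : comPzRingType) n (p_ : 'I_n -> nat)
  (B : forall i, 'M[R]_(p_ i)) : \det (mxdiag B) = \prod_i \det (B i).
Proof.
elim: n p_ B => [|n IH] p_ B.
  rewrite [RHS]big_ord0.
  have e : (\sum_(i < 0) p_ i = 0)%N by rewrite big_ord0.
  move: (mxdiag B) e; move: (\sum_(i < 0) p_ i)%N => s A e; subst s.
  exact: det_mx00.
rewrite mxdiag_recl det_cast det_ublock IH big_ord_recl; congr (_ * _).
Qed.

Lemma det_schur (R : comPzRingType) n1 n2 (A : 'M[R]_n1) (B : 'M[R]_(n1, n2))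
  (C : 'M[R]_(n2, n1)) (D : 'M[R]_n2) (Z : 'M[R]_(n2, n1)) :
  C + D *m Z = 0 -> \det (block_mx A B C D) = \det (A + B *m Z) * \det D.
Proof.
move=> hZ.
have : \det (block_mx A B C D *m block_mx 1%:M 0 Z 1%:M) = \det (block_mx A B C D).
  by rewrite det_mulmx det_lblock !det1 !mulr1.
rewrite mulmx_block !mulmx0 !mulmx1 ?addr0 ?add0r hZ det_ublock => <-.
by [].
Qed.



Lemma card_pairs (T : finType) (A : {set T}) (u v : T) k :
  u \in A -> v \in A -> u != v ->
  #|[set S : {set T} | [&& S \subset A, #|S| == k, u \in S & v \in S]]| =
  binm2 (#|A| - 2) k.
Proof.
move=> uA vA uv; rewrite /binm2.
case: ltnP => hk.
  apply/eqP; rewrite cards_eq0; apply/eqP/setP => S; rewrite !inE.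
  apply/negP => /and4P [_ /eqP hS uS vS].
  have : (#|[set u; v]| <= #|S|)%N by apply: subset_leq_card; rewrite subUset !sub1set uS vS.
  by rewrite cards2 uv hS leqNgt hk.
have uAv : u \notin A :\ u :\ v by rewrite !inE eqxx andbF.
have vAu : v \notin A :\ u :\ v by rewrite !inE eqxx.
have cA : #|A :\ u :\ v| = (#|A| - 2)%N.
  rewrite (cardsD1 u A) uA add1n /= (cardsD1 v (A :\ u)) !inE eq_sym uv vA /=.
  by rewrite add1n subn2 /=.
rewrite -cA -cards_draws.
set D := [set S' : {set T} | S' \subset A :\ u :\ v & #|S'| == (k - 2)%N].
have -> : [set S : {set T} | [&& S \subset A, #|S| == k, u \in S & v \in S]] =
   (fun S' => u |: (v |: S')) @: D.
  apply/setP => S; rewrite inE; apply/idP/imsetP.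
  - case/and4P => SA /eqP hS uS vS; exists (S :\ u :\ v).
      rewrite inE; apply/andP; split; first by rewrite setSD // setSD.
      rewrite (cardsD1 u S) uS in hS.
      rewrite (cardsD1 v (S :\ u)) !inE eq_sym uv vS /= in hS.
      by rewrite -hS add1n add1n subn2.
    by rewrite setD1K ?inE 1?eq_sym ?uv ?vS // setD1K.
  - case=> S'; rewrite inE => /andP [S'A /eqP hS'] ->.
    have uS' : u \notin S' by apply: contra uAv; apply: (subsetP S'A).
    have vS' : v \notin S' by apply: contra vAu; apply: (subsetP S'A).
    apply/and4P; split.
    + rewrite !subUset !sub1set uA vA /=.
      by apply: (subset_trans S'A); apply: (subset_trans (subsetDl _ _)); apply: subsetDl.
    + rewrite !cardsU1 !inE negb_or uS' vS' uv hS' /=.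
      by rewrite add1n add1n subn2 /= prednK ?prednK // -ltnS ?(ltn_predK hk) //; lia.
    + by rewrite !inE eqxx.
    + by rewrite !inE eqxx orbT.
apply: card_in_imset => S1 S2; rewrite !inE => /andP [S1A _] /andP [S2A _] e.
have uS1 : u \notin S1 by apply: contra uAv; apply: (subsetP S1A).
have vS1 : v \notin S1 by apply: contra vAu; apply: (subsetP S1A).
have uS2 : u \notin S2 by apply: contra uAv; apply: (subsetP S2A).
have vS2 : v \notin S2 by apply: contra vAu; apply: (subsetP S2A).
have uvS1 : u \notin v |: S1 by rewrite !inE negb_or uv.
have uvS2 : u \notin v |: S2 by rewrite !inE negb_or uv.
by rewrite -(setU1K vS1) -(setU1K uvS1) e setU1K // setU1K.
Qed.


Lemma card_bigcup_disj (T : finType) n (A : 'I_n -> {set T}) :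
  (forall i j, i != j -> [disjoint A i & A j]) ->
  #|\bigcup_(i < n) A i| = (\sum_(i < n) #|A i|)%N.
Proof.
elim: n A => [|n IH] A hd; first by rewrite !big_ord0 cards0.
rewrite !big_ord_recr /= cardsU IH; last first.
  move=> i j hij; apply: hd; apply: contra hij => /eqP h.
  by apply/eqP/val_inj; move: h => /(congr1 val).
have -> : \bigcup_(i < n) A (widen_ord (leqnSn n) i) :&: A ord_max = set0.
  apply/disjoint_setI0; rewrite disjoint_sym; apply/bigcup_disjoint => i _.
  rewrite disjoint_sym; apply: hd.
  by rewrite -val_eqE /= neq_ltn ltn_ord.
by rewrite cards0 subn0.
Qed.

Lemma card_block t p (i : 'I_t) :
  #|[set w : 'I_(t * p) | (mxtens_unindex w).1 == i]| = p.
Proof.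
have -> : [set w : 'I_(t * p) | (mxtens_unindex w).1 == i] =
   (fun j => mxtens_index (i, j)) @: [set: 'I_p].
  apply/setP => w; rewrite inE; apply/eqP/imsetP.
  - move=> <-; exists (mxtens_unindex w).2; first by rewrite inE.
    by rewrite -surjective_pairing mxtens_unindexK.
  - by case=> j _ ->; rewrite mxtens_indexK.
rewrite card_imset ?cardsT ?card_ord //.
by move=> j1 j2 /(can_inj (@mxtens_indexK _ _)) [].
Qed.

Lemma degree_sum (T : finType) k r (E : {set {set T}}) (x : T) :
  regular k r E -> (\sum_y adj E x y)%N = (r * (k - 1))%N.
Proof.
case=> hu hr.
have -> : (\sum_y adj E x y = \sum_y \sum_e ((e \in E) && (x \in e) && (y \in e) && (x != y)))%N.
  apply: eq_bigr => y _; rewrite /adj; case: eqP => [_|_].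
    by rewrite big1 // => e _; rewrite andbF.
  rewrite -sum1_card big_mkcond /=; apply: eq_bigr => e _.
  by rewrite !inE andbT andbA.
rewrite exchange_big /=.
have -> : (\sum_e \sum_y ((e \in E) && (x \in e) && (y \in e) && (x != y)) =
          \sum_e ((e \in E) && (x \in e)) * (k - 1))%N.
  apply: eq_bigr => e _.
  case: (boolP ((e \in E) && (x \in e))) => /= h; last first.
    by rewrite big1 // => y _; move: h; case: (e \in E); case: (x \in e).
  case/andP: h => eE xe.
  have ce : (#|e :\ x| = k - 1)%N.
    by have := cardsD1 x e; rewrite xe hu // add1n => ->; rewrite subn1.
  rewrite mul1n -ce -sum1_card [RHS]big_mkcond /=; apply: eq_bigr => y _.
  by rewrite !inE eq_sym andbC; case: (_ && _).
rewrite -big_distrl /= -(hr x) -sum1_card [in RHS]big_mkcond /=; congr (_ * _)%N.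
by apply: eq_bigr => e _; rewrite !inE.
Qed.

Local Close Scope ring_scope.

Definition dvo t p (w : 'I_(t * p)) : 'I_t := (mxtens_unindex w).1.

Lemma mem_block_inl t p m (i : 'I_t) (v : 'I_(t * p)) :
  (inl v \in block m i) = (dvo v == i).
Proof.
rewrite /block (mem_imset _ _ (@inl_inj _ _)) inE.
by rewrite -val_eqE.
Qed.

Lemma mem_block_inr t p m (i : 'I_t) z :
  (inr z \in @block t p m i) = false.
Proof. by apply/imsetP => -[v _]. Qed.

Lemma mem_copy_inr t p m (i : 'I_t) (j : 'I_p) (i' : 'I_t) (j' : 'I_p) (x : 'I_m) :
  (inr (i', j', x) \in @copy_vertices t p m i j) = (i' == i) && (j' == j).
Proof.
apply/imsetP/andP => [[y _ [-> ->]] //|[/eqP -> /eqP ->]].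
by exists x.
Qed.

Lemma mem_copy_inl t p m (i : 'I_t) (j : 'I_p) v :
  (inl v \in @copy_vertices t p m i j) = false.
Proof. by apply/imsetP => -[y _]. Qed.

Lemma card_block_set t p m (i : 'I_t) : #|@block t p m i| = p.
Proof.
rewrite /block card_imset; last exact: inl_inj.
transitivity #|[set w : 'I_(t * p) | (mxtens_unindex w).1 == i]|; last exact: card_block.
by apply: eq_card => w; rewrite !inE.
Qed.

Lemma card_copy t p m (i : 'I_t) (j : 'I_p) : #|@copy_vertices t p m i j| = m.
Proof.
rewrite /copy_vertices card_imset ?cardsT ?card_ord //.
by move=> x y [].
Qed.

Lemma disj_block_copy t p m (i : 'I_t) (j : 'I_p) :
  [disjoint @block t p m i & @copy_vertices t p m i j].
Proof.
apply/pred0P => z /=; case: z => [v|[[a b] x]].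
  by rewrite mem_copy_inl andbF.
by rewrite mem_block_inr.
Qed.

Lemma card_UC t p m (i : 'I_t) (j : 'I_p) :
  #|@block t p m i :|: @copy_vertices t p m i j| = (p + m)%N.
Proof.
by rewrite cardsU (disjoint_setI0 (disj_block_copy _ _ _)) cards0 subn0
  card_block_set card_copy.
Qed.


Definition F2s (T : finType) k (U C : {set T}) :=
  [set S : {set T} | [&& #|S| == k, S \subset U :|: C, S :&: U != set0 &
                         S :&: C != set0]].

Lemma meetC (T : finType) (U C S : {set T}) :
  [disjoint U & C] -> S \subset U :|: C -> (S :&: C != set0) = ~~ (S \subset U).
Proof.
move=> dUC SUC; apply/idP/idP.
- case/set0Pn => z; rewrite inE => /andP [zS zC]; apply/negP => SU.
  have zU := subsetP SU z zS.
  by move: dUC => /disjoint_setI0 /setP /(_ z); rewrite !inE zU zC.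
- case/subsetPn => z zS zU; apply/set0Pn; exists z; rewrite inE zS /=.
  by move: (subsetP SUC z zS); rewrite inE (negbTE zU).
Qed.

Lemma card_UCd (T : finType) (U C : {set T}) :
  [disjoint U & C] -> #|U :|: C| = (#|U| + #|C|)%N.
Proof. by move=> d; rewrite cardsU (disjoint_setI0 d) cards0 subn0. Qed.

Lemma F2_UU (T : finType) k (U C : {set T}) u v :
  [disjoint U & C] -> u \in U -> v \in U -> u != v ->
  #|[set S in F2s k U C | (u \in S) && (v \in S)]| =
  (binm2 (#|U| + #|C| - 2) k - binm2 (#|U| - 2) k)%N.
Proof.
move=> dUC uU vU uv.
have uUC : u \in U :|: C by rewrite inE uU.
have vUC : v \in U :|: C by rewrite inE vU.
rewrite -(card_UCd dUC) -(card_pairs k uUC vUC uv) -(card_pairs k uU vU uv).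
set A := [set S : {set T} | _ ]; set B := [set S : {set T} | _ ].
have BA : B \subset A.
  apply/subsetP => S; rewrite !inE => /and4P [SU -> -> ->]; rewrite andbT.
  by rewrite andbT; apply: (subset_trans SU); apply: subsetUl.
rewrite -(setIidPr BA) -cardsD; apply: eq_card => S; rewrite !inE.
case SUC : (S \subset U :|: C) => /=; last by rewrite !andbF.
rewrite (meetC dUC SUC).
case uS : (u \in S); last by rewrite !andbF.
case vS : (v \in S); last by rewrite !andbF.
have -> : S :&: U != set0 by apply/set0Pn; exists u; rewrite inE uS uU.
by case: (#|S| == k); case: (S \subset U).
Qed.

Lemma F2_UC (T : finType) k (U C : {set T}) u v :
  [disjoint U & C] -> u \in U -> v \in C ->
  #|[set S in F2s k U C | (u \in S) && (v \in S)]| = binm2 (#|U| + #|C| - 2) k.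
Proof.
move=> dUC uU vC.
have uUC : u \in U :|: C by rewrite inE uU.
have vUC : v \in U :|: C by rewrite inE vC orbT.
have uv : u != v.
  apply/eqP => e; subst v.
  by move: dUC => /disjoint_setI0 /setP /(_ u); rewrite !inE uU vC.
rewrite -(card_UCd dUC) -(card_pairs k uUC vUC uv); apply: eq_card => S.
rewrite !inE.
case uS : (u \in S); last by rewrite !andbF.
case vS : (v \in S); last by rewrite !andbF.
have -> : S :&: U != set0 by apply/set0Pn; exists u; rewrite inE uS uU.
have -> : S :&: C != set0 by apply/set0Pn; exists v; rewrite inE vS vC.
by case: (#|S| == k); case: (S \subset U :|: C).
Qed.

Lemma F2s_sym (T : finType) k (U C : {set T}) : F2s k U C = F2s k C U.
Proof.
apply/setP => S; rewrite !inE setUC.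
by case: (#|S| == k); case: (S \subset C :|: U); case: (S :&: U != set0);
  case: (S :&: C != set0).
Qed.

Lemma F2_CC (T : finType) k (U C : {set T}) u v :
  [disjoint U & C] -> u \in C -> v \in C -> u != v ->
  #|[set S in F2s k U C | (u \in S) && (v \in S)]| =
  (binm2 (#|U| + #|C| - 2) k - binm2 (#|C| - 2) k)%N.
Proof.
move=> dUC uC vC uv; rewrite F2s_sym F2_UU //; first by rewrite addnC.
by rewrite disjoint_sym.
Qed.



Definition F0s t p m (E0 : {set {set 'I_(t * p)}}) : {set {set corona_vertex t p m}} :=
  [set (@inl _ ('I_t * 'I_p * 'I_m)%type) @: e | e : {set 'I_(t * p)} in E0].
Definition F1s t p m (G : 'I_t -> {set {set 'I_m}}) (i : 'I_t) (j : 'I_p)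
  : {set {set corona_vertex t p m}} :=
  [set (fun x : 'I_m => @inr 'I_(t * p) _ (i, j, x)) @: e | e : {set 'I_m} in G i].
Definition F2c k t p m (i : 'I_t) (j : 'I_p) : {set {set corona_vertex t p m}} :=
  F2s k (@block t p m i) (@copy_vertices t p m i j).

Lemma corona_decomp k t p m E0 G :
  corona k m E0 G = F0s m E0 :|: (\bigcup_(i < t) \bigcup_(j < p) F1s G i j)
     :|: (\bigcup_(i < t) \bigcup_(j < p) F2c k m i j).
Proof. by []. Qed.

Lemma Xsig k t p m G (i : 'I_t) (j : 'I_p) x y e :
  e \in [set e in F1s G i j | (x \in e) && (y \in e)] :|:
         [set e in F2c k m i j | (x \in e) && (y \in e)] ->
  (exists w, inr (i, j, w) \in e) /\
  (forall i' j' w, inr (i', j', w) \in e -> i' = i /\ j' = j).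
Proof.
rewrite !inE => /orP [/andP [/imsetP [e1 _ ->] /andP [/imsetP [w we _] _]]|].
  split; first by exists w; apply: (imset_f (fun x : 'I_m => @inr 'I_(t * p) _ (i, j, x))).
  by move=> i' j' w' /imsetP [yy _ [-> ->]].
case/andP => /and4P [_ SUC _ /set0Pn [z]]; rewrite inE => /andP [ze zC] _.
split.
  move: zC => /imsetP [w _ ez]; exists w; by rewrite -ez.
move=> i' j' w' /(subsetP SUC); rewrite inE mem_block_inr /=.
by rewrite mem_copy_inr => /andP [/eqP -> /eqP ->].
Qed.

Lemma corona_count k t p m E0 G (x y : corona_vertex t p m) :
  #|[set e in corona k m E0 G | (x \in e) && (y \in e)]| =
  (#|[set e in F0s m E0 | (x \in e) && (y \in e)]| +
   \sum_(i < t) \sum_(j < p) (#|[set e in F1s G i j | (x \in e) && (y \in e)]| +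
                              #|[set e in F2c k m i j | (x \in e) && (y \in e)]|))%N.
Proof.
set X := fun i j => [set e in F1s G i j | (x \in e) && (y \in e)] :|:
                    [set e in F2c k m i j | (x \in e) && (y \in e)].
have -> : [set e in corona k m E0 G | (x \in e) && (y \in e)] =
   [set e in F0s m E0 | (x \in e) && (y \in e)] :|:
   \bigcup_(i < t) \bigcup_(j < p) X i j.
  apply/setP => e; rewrite corona_decomp !inE; apply/idP/idP.
  - case/andP => /orP [/orP [eF0|/bigcupP [i _ /bigcupP [j _ eF1]]]|
                     /bigcupP [i _ /bigcupP [j _ eF2]]] Q.
    + by rewrite eF0 Q.
    + apply/orP; right; apply/bigcupP; exists i => //; apply/bigcupP; exists j => //.
      by rewrite !inE eF1 Q.
    + apply/orP; right; apply/bigcupP; exists i => //; apply/bigcupP; exists j => //.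
      by apply/setUP; right; rewrite in_set eF2 Q.
  - case/orP => [/andP [eF0 Q]| /bigcupP [i _ /bigcupP [j _]]].
      by rewrite eF0 Q.
    rewrite !inE => /orP [/andP [eF1 Q]|/andP [eF2 Q]]; rewrite Q andbT.
      apply/orP; left; apply/orP; right.
      by apply/bigcupP; exists i => //; apply/bigcupP; exists j.
    apply/orP; right; apply/bigcupP; exists i => //; apply/bigcupP; exists j => //.
    by rewrite /F2c /F2s inE.
have disjX : forall i j i' j', (i, j) != (i', j') -> [disjoint X i j & X i' j'].
  move=> i j i' j' hne; apply/pred0P => e /=; apply/negP => /andP [e1 e2].
  have [[w hw] _] := Xsig e1.
  have [_ h2] := Xsig e2.
  have [ei ej] := h2 _ _ _ hw.
  by move: hne; rewrite ei ej eqxx.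
rewrite cardsU.
have -> : [set e in F0s m E0 | (x \in e) && (y \in e)] :&:
          \bigcup_(i < t) \bigcup_(j < p) X i j = set0.
  apply/setP => e; rewrite !inE; apply/negP => /andP [/andP [eF0 _]].
  case/bigcupP => i _ /bigcupP [j _ eX].
  have [[w hw] _] := Xsig eX.
  by move: eF0 hw => /imsetP [e0 _ ->] /imsetP [v _].
rewrite cards0 subn0; congr (_ + _)%N.
rewrite card_bigcup_disj; last first.
  move=> i i' hii; rewrite disjoint_sym; apply/bigcup_disjoint => j' _.
  rewrite disjoint_sym; apply/bigcup_disjoint => j _.
  by apply: disjX; rewrite xpair_eqE negb_and hii.
apply: eq_bigr => i _.
rewrite card_bigcup_disj; last first.
  by move=> j j' hjj; apply: disjX; rewrite xpair_eqE negb_and hjj orbT.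
apply: eq_bigr => j _.
rewrite /X cardsU.
have -> : [set e in F1s G i j | (x \in e) && (y \in e)] :&:
          [set e in F2c k m i j | (x \in e) && (y \in e)] = set0.
  apply/setP => e; rewrite !inE; apply/negP.
  case/andP => /andP [/imsetP [e1 _ ->] _] /andP [/and4P [_ _ /set0Pn [z zb] _] _].
  move: zb; rewrite inE => /andP [/imsetP [w _ ->]].
  by rewrite mem_block_inr.
by rewrite cards0 subn0.
Qed.


Lemma F0_LL t p m (E0 : {set {set 'I_(t * p)}}) u v :
  #|[set e in F0s m E0 | (inl u \in e) && (inl v \in e)]| =
  #|[set e0 in E0 | (u \in e0) && (v \in e0)]|.
Proof.
have -> : [set e in F0s m E0 | (inl u \in e) && (inl v \in e)] =
  (fun e0 : {set 'I_(t * p)} => (@inl _ ('I_t * 'I_p * 'I_m)%type) @: e0) @: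
     [set e0 in E0 | (u \in e0) && (v \in e0)].
  apply/setP => e; rewrite !inE; apply/idP/imsetP.
  - case/andP => /imsetP [e0 e0E ->]; rewrite !(mem_imset _ _ (@inl_inj _ _)) => Q.
    by exists e0 => //; rewrite inE e0E Q.
  - case=> e0; rewrite inE => /andP [e0E Q] ->.
    by rewrite !(mem_imset _ _ (@inl_inj _ _)) Q andbT; apply: imset_f.
by rewrite card_imset //; apply: imset_inj; apply: inl_inj.
Qed.

Lemma F0_R t p m (E0 : {set {set 'I_(t * p)}}) (x : corona_vertex t p m) z :
  #|[set e in F0s m E0 | (x \in e) && (inr z \in e)]| = 0%N.
Proof.
apply/eqP; rewrite cards_eq0; apply/eqP/setP => e; rewrite !inE.
apply/negP => /and3P [/imsetP [e0 _ ->] _ /imsetP [w _]].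
by [].
Qed.

Lemma F1_L t p m G (i : 'I_t) (j : 'I_p) v (y : corona_vertex t p m) :
  #|[set e in F1s G i j | (inl v \in e) && (y \in e)]| = 0%N.
Proof.
apply/eqP; rewrite cards_eq0; apply/eqP/setP => e; rewrite !inE.
apply/negbTE/negP => /and3P [H1 H2 H3]. move: H1 => /imsetP [e0 _ E]. subst e. move: H2 => /imsetP [w _ E]. done.
Qed.

Lemma F1_RR t p m G (i : 'I_t) (j : 'I_p) (i1 : 'I_t) (j1 : 'I_p) (x : 'I_m)
  (i2 : 'I_t) (j2 : 'I_p) (y : 'I_m) :
  #|[set e in F1s G i j | (inr (i1, j1, x) \in e) && (inr (i2, j2, y) \in e)]| =
  if [&& i1 == i, j1 == j, i2 == i & j2 == j]
  then #|[set e1 in G i | (x \in e1) && (y \in e1)]| else 0%N.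
Proof.
case: ifP => h.
  case/and4P: h => /eqP e1 /eqP e2 /eqP e3 /eqP e4; subst.
  have -> : [set e in F1s G i j | (inr (i, j, x) \in e) && (inr (i, j, y) \in e)] =
    (fun e1 : {set 'I_m} => (fun x : 'I_m => @inr 'I_(t * p) _ (i, j, x)) @: e1) @:
     [set e1 in G i | (x \in e1) && (y \in e1)].
    have fi : injective (fun x : 'I_m => @inr 'I_(t * p) _ (i, j, x)) by move=> a b [].
    apply/setP => e; rewrite !inE; apply/idP/imsetP.
    - case/andP => /imsetP [e0 e0E ->].
      rewrite (mem_imset _ _ fi).
      rewrite (mem_imset _ _ fi) => Q.
      by exists e0 => //; rewrite inE e0E Q.
    - case=> e0; rewrite inE => /andP [e0E Q] ->.
      rewrite (mem_imset _ _ fi).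
      rewrite (mem_imset _ _ fi).
      by rewrite Q andbT; apply: imset_f.
  rewrite card_imset //; apply: imset_inj; by move=> a b [].
apply/eqP; rewrite cards_eq0; apply/eqP/setP => e; rewrite !inE.
apply/negbTE/negP => /and3P [H1 H2 H3]; move: H1 => /imsetP [e0 _ E]; subst e.
move: H2 H3 => /imsetP [w _ [E1 E2 _]] /imsetP [w' _ [E3 E4 _]].
by move: h; rewrite E1 E2 E3 E4 !eqxx.
Qed.


Lemma F2c_sub k t p m (i : 'I_t) (j : 'I_p) S z :
  S \in F2c k m i j -> z \in S -> z \in @block t p m i :|: @copy_vertices t p m i j.
Proof. by rewrite /F2c /F2s inE => /and4P [_ SU _ _] /(subsetP SU). Qed.

Lemma F2_LL_c k t p m (i : 'I_t) (j : 'I_p) (u v : 'I_(t * p)) : u != v ->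
  #|[set e in F2c k m i j | (inl u \in e) && (inl v \in e)]| =
  if (dvo u == i) && (dvo v == i)
  then (binm2 (p + m - 2) k - binm2 (p - 2) k)%N else 0%N.
Proof.
move=> uv; case: ifP => h.
  case/andP: h => hu hv.
  rewrite /F2c F2_UU ?card_block_set ?card_copy ?mem_block_inl //.
    exact: disj_block_copy.
apply/eqP; rewrite cards_eq0; apply/eqP/setP => e; rewrite in_set in_set0.
apply/negbTE/negP => /andP [eF /andP [ue ve]].
move: (F2c_sub eF ue) (F2c_sub eF ve); rewrite !inE !mem_block_inl !mem_copy_inl.
by rewrite !orbF => a b; move: h; rewrite a b.
Qed.

Lemma F2_LR_c k t p m (i : 'I_t) (j : 'I_p) (u : 'I_(t * p)) i1 j1 (x : 'I_m) :
  #|[set e in F2c k m i j | (inl u \in e) && (inr (i1, j1, x) \in e)]| =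
  if (dvo u == i) && ((i1 == i) && (j1 == j))
  then binm2 (p + m - 2) k else 0%N.
Proof.
case: ifP => h.
  case/andP: h => hu hv.
  by rewrite /F2c F2_UC ?card_block_set ?card_copy ?mem_block_inl ?mem_copy_inr //;
    exact: disj_block_copy.
apply/eqP; rewrite cards_eq0; apply/eqP/setP => e; rewrite in_set in_set0.
apply/negbTE/negP => /andP [eF /andP [ue ve]].
move: (F2c_sub eF ue) (F2c_sub eF ve); rewrite !inE !mem_block_inl !mem_copy_inl.
by rewrite mem_block_inr mem_copy_inr orbF /= => a b; move: h; rewrite a b.
Qed.

Lemma F2_RR_c k t p m (i : 'I_t) (j : 'I_p) (i1 : 'I_t) (j1 : 'I_p) (x : 'I_m)
  (i2 : 'I_t) (j2 : 'I_p) (y : 'I_m) : (i1, j1, x) != (i2, j2, y) ->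
  #|[set e in F2c k m i j | (inr (i1, j1, x) \in e) && (inr (i2, j2, y) \in e)]| =
  if [&& i1 == i, j1 == j, i2 == i & j2 == j]
  then (binm2 (p + m - 2) k - binm2 (m - 2) k)%N else 0%N.
Proof.
move=> ne; case: ifP => h.
  case/and4P: h => /eqP e1 /eqP e2 /eqP e3 /eqP e4; subst.
  rewrite /F2c F2_CC ?card_block_set ?card_copy ?mem_copy_inr ?eqxx //.
    exact: disj_block_copy.
apply/eqP; rewrite cards_eq0; apply/eqP/setP => e; rewrite in_set in_set0.
apply/negbTE/negP => /andP [eF /andP [ue ve]].
move: (F2c_sub eF ue) (F2c_sub eF ve); rewrite !inE !mem_block_inr !mem_copy_inr /=.
by move=> /andP [a b] /andP [c d]; move: h; rewrite a b c d.
Qed.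


Lemma sum2_delta t p (i0 : 'I_t) (j0 : 'I_p) (F : 'I_t -> 'I_p -> nat) :
  (forall i j, (i != i0) || (j != j0) -> F i j = 0%N) ->
  (\sum_(i < t) \sum_(j < p) F i j = F i0 j0)%N.
Proof.
move=> hF; rewrite (bigD1 i0) //=.
rewrite [X in (_ + X)%N]big1; last first.
  move=> i ne; rewrite big1 // => j _; apply: hF; by rewrite ne.
rewrite addn0 (bigD1 j0) //= [X in (_ + X)%N]big1 ?addn0 // => j ne.
by apply: hF; rewrite ne orbT.
Qed.

Lemma sum_const_ord n c : (\sum_(j < n) c = n * c)%N.
Proof. by rewrite big_const_ord iter_addn_0 mulnC. Qed.

Lemma adj_LL k t p m E0 G (u v : 'I_(t * p)) : u != v ->
  adj (corona k m E0 G) (inl u) (inl v) =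
  (adj E0 u v + (dvo u == dvo v) * (p * (binm2 (p + m - 2) k - binm2 (p - 2) k)))%N.
Proof.
move=> uv; rewrite /adj (negbTE uv).
have -> : (inl u == inl v :> corona_vertex t p m) = false.
  by apply/negbTE; apply: contra uv => /eqP [->].
rewrite corona_count F0_LL; congr (_ + _)%N.
under eq_bigr => i _ do under eq_bigr => j _ do rewrite F1_L add0n (@F2_LL_c k t p m i j u v uv).
rewrite (bigD1 (dvo u)) //= [X in (_ + X)%N]big1; last first.
  by move=> i ne; rewrite big1 // => j _; rewrite eq_sym (negbTE ne).
rewrite addn0 sum_const_ord eqxx /= [(dvo v == dvo u)]eq_sym.
by case: (dvo u == dvo v); rewrite ?muln0 ?mul1n ?mul0n.
Qed.

Lemma adj_LR k t p m E0 G (u : 'I_(t * p)) i1 j1 (x : 'I_m) :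
  adj (corona k m E0 G) (inl u) (inr (i1, j1, x)) =
  ((dvo u == i1) * binm2 (p + m - 2) k)%N.
Proof.
rewrite /adj /= corona_count F0_R add0n.
under eq_bigr => i _ do under eq_bigr => j _ do rewrite F1_L add0n F2_LR_c.
rewrite (@sum2_delta t p i1 j1) ?eqxx ?andbT.
  by case: (dvo u == i1); rewrite ?mul1n ?mul0n.
move=> i j /orP [] ne.
  by rewrite [i1 == i]eq_sym (negbTE ne) !andbF.
by rewrite [j1 == j]eq_sym (negbTE ne) !andbF.
Qed.

Lemma adj_RR k t p m E0 G (i1 : 'I_t) (j1 : 'I_p) (x : 'I_m)
  (i2 : 'I_t) (j2 : 'I_p) (y : 'I_m) :
  adj (corona k m E0 G) (inr (i1, j1, x)) (inr (i2, j2, y)) =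
  if (i1 == i2) && (j1 == j2) then
    (if x == y then 0 else adj (G i1) x y + (binm2 (p + m - 2) k - binm2 (m - 2) k))%N
  else 0%N.
Proof.
rewrite /adj.
case: (eqVneq (inr (i1, j1, x) : corona_vertex t p m) (inr (i2, j2, y))) => [[-> -> ->]|ne].
  by rewrite !eqxx.
have ne' : (i1, j1, x) != (i2, j2, y) by apply: contra ne => /eqP ->.
rewrite corona_count F0_R add0n.
under eq_bigr => i _ do under eq_bigr => j _ do rewrite F1_RR (@F2_RR_c k t p m i j i1 j1 x i2 j2 y ne').
rewrite (@sum2_delta t p i1 j1); last first.
  move=> i j /orP [] ne2.
    by rewrite [i1 == i]eq_sym (negbTE ne2) /= add0n.
  by rewrite [j1 == j]eq_sym (negbTE ne2) /= andbF add0n.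
rewrite !eqxx /=.
case: (eqVneq i1 i2) => [ei|nei]; last by [].
subst i2; case: (eqVneq j1 j2) => [ej|nej]; last by [].
subst j2; case: (eqVneq x y) => [exy|nexy]; first by move: ne'; rewrite exy eqxx.
by [].
Qed.


Definition mdo t p (w : 'I_(t * p)) : 'I_p := (mxtens_unindex w).2.

Definition pm t p (m : nat) := fun _ : 'I_(t * p) => m.
Arguments pm : clear implicits.

Definition fvert t p m (s : 'I_(t * p + \sum_(w < t * p) pm t p m w)) :
  corona_vertex t p m :=
  match split s with
  | inl u => inl u
  | inr w => inr (dvo (tagnat.sig1 w), mdo (tagnat.sig1 w), (tagnat.sig2 w : 'I_m))
  end.

Lemma dvo_mdo_inj t p (w1 w2 : 'I_(t * p)) :
  dvo w1 = dvo w2 -> mdo w1 = mdo w2 -> w1 = w2.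
Proof.
move=> h1 h2; rewrite -(mxtens_unindexK w1) -(mxtens_unindexK w2).
by rewrite [mxtens_unindex w1]surjective_pairing [mxtens_unindex w2]surjective_pairing
  -/(dvo w1) -/(dvo w2) -/(mdo w1) -/(mdo w2) h1 h2.
Qed.

Lemma fvert_inj t p m : injective (@fvert t p m).
Proof.
move=> s1 s2; rewrite /fvert.
case: (split_ordP s1) => u1 ->; case: (split_ordP s2) => u2 -> //.
  by case=> ->.
case=> e1 e2 e3.
have e : tagnat.sig1 u1 = tagnat.sig1 u2.
  by apply/val_inj; rewrite /= (divn_eq (tagnat.sig1 u1) p) (divn_eq (tagnat.sig1 u2) p) e1 e2.
apply: congr1; apply: tagnat.sig_inj.
rewrite tagnat.sigE12 [tagnat.sig u2]tagnat.sigE12.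
move: (tagnat.sig2 u1) (tagnat.sig2 u2) e3; rewrite e => a b ->.
by [].
Qed.

Lemma card_corona t p m :
  (t * p + \sum_(w < t * p) pm t p m w)%N = #|{: corona_vertex t p m}|.
Proof.
rewrite /corona_vertex card_sum !card_prod !card_ord.
by rewrite /pm sum_const_ord.
Qed.

Local Open Scope ring_scope.

Lemma adj_sym (V : finType) (E : {set {set V}}) x y : adj E x y = adj E y x.
Proof.
rewrite /adj eq_sym; case: (y == x) => //.
have -> : [set e in E | (x \in e) && (y \in e)] = [set e in E | (y \in e) && (x \in e)].
  by apply/setP => e; rewrite !inE; case: (e \in E); case: (x \in e); case: (y \in e).
by [].
Qed.

Lemma adj_diag (V : finType) (E : {set {set V}}) x : adj E x x = 0%N.
Proof. by rewrite /adj eqxx. Qed.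

Lemma regular_k0 (V : finType) r (E : {set {set V}}) (x : V) :
  is_hypergraph E -> regular 0 r E -> r = 0%N.
Proof.
move=> hE [hu hr]; rewrite -(hr x); apply/eqP; rewrite cards_eq0; apply/eqP/setP => e.
rewrite !inE; apply/negbTE/negP => /andP [eE _].
by have := hE e eE; rewrite hu.
Qed.

Lemma rowsum_Y (R : realFieldType) k r m (Gi : {set {set 'I_m}}) (c lambda : R) (x : 'I_m) :
  is_hypergraph Gi -> regular k r Gi ->
  \sum_y (adjmx_ord R Gi + c *: (const_mx 1 - 1%:M) - lambda%:M) x y =
  r%:R * (k%:R - 1) + c * (m%:R - 1) - lambda.
Proof.
move=> hG hreg.
have hdeg : \sum_y ((adj Gi x y)%:R : R) = r%:R * (k%:R - 1).
  rewrite -natr_sum (degree_sum x hreg) natrM.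
  case: k hreg => [|k] hreg.
    by rewrite (regular_k0 x hG hreg) !mul0r.
  by rewrite subn1 /= -addn1 natrD addrK.
under eq_bigr => y _ do rewrite !mxE.
rewrite !big_split /= hdeg -!addrA; congr (_ + _).
have d1 : \sum_(y < m) ((x == y)%:R : R) = 1.
  rewrite (bigD1 x) //= eqxx big1 ?addr0 // => y ne.
  by rewrite eq_sym (negbTE ne).
rewrite sumrN; under [X in _ - X = _]eq_bigr => y _ do rewrite -mulr_natr.
rewrite -mulr_sumr -mulr_sumr d1 mulr1 sumrB d1 sumr_const card_ord.
by [].
Qed.

Lemma binm2_mono x y k : (x <= y)%N -> (binm2 x k <= binm2 y k)%N.
Proof. by move=> h; rewrite /binm2; case: ifP => // _; apply: leq_bin2l. Qed.


Unset Implicit Arguments.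

Theorem theorem3p1 (R : realFieldType) (k r t p m : nat)
  (E0 : {set {set 'I_(t * p)}}) (G : 'I_t -> {set {set 'I_m}})
  (hp : (0 < p)%N) (hm : (2 <= m)%N)
  (hE0 : is_hypergraph E0) (hE0k : uniform k E0)
  (hG : forall i, is_hypergraph (G i)) (hGkr : forall i, regular k r (G i))
  (lambda : R) :
  let a : R := if (2 <= p)%N
               then p%:R * ((binm2 (p + m - 2) k)%:R - (binm2 (p - 2) k)%:R)
               else 0 in
  let b : R := (binm2 (p + m - 2) k)%:R in
  let c : R := (binm2 (p + m - 2) k)%:R - (binm2 (m - 2) k)%:R in
  let Y (i : 'I_t) : 'M[R]_m :=
    adjmx_ord R (G i) + c *: (const_mx 1 - 1%:M) in
  (forall i, Y i - lambda%:M \in unitmx) ->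
  charP (adjmx R (corona k m E0 G)) lambda =
  (\prod_(i < t) \det (Y i - lambda%:M)) ^+ p *
  \det (adjmx_ord R E0 +
        tensmx (1%:M : 'M[R]_t)
          ((a - b ^+ 2 * p%:R * m%:R
                / (r%:R * (k%:R - 1) + c * (m%:R - 1) - lambda)) *: (const_mx 1 : 'M[R]_p)
           - (a + lambda) *: 1%:M)).
Proof.
move=> a b c Y hY.
set Ec := corona k m E0 G.
pose F (x y : corona_vertex t p m) : R := (adj Ec x y)%:R - (x == y)%:R * lambda.
have step1 : charP (adjmx R Ec) lambda =
    \det (\matrix_(i < #|{: corona_vertex t p m}|, j < #|{: corona_vertex t p m}|)
            F (enum_val i) (enum_val j)).
  rewrite /charP; congr (\det _); apply/matrixP => i j; rewrite !mxE /F.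
  by rewrite (inj_eq enum_val_inj) mulr_natl.
rewrite step1 (det_reorder F (@fvert_inj t p m) (card_corona t p m)).
pose s0 : R := r%:R * (k%:R - 1) + c * (m%:R - 1).
pose a' : R := p%:R * ((binm2 (p + m - 2) k)%:R - (binm2 (p - 2) k)%:R).
pose P : 'M[R]_(t * p) := \matrix_(u, v) ((adj E0 u v)%:R +
    (if u == v then - lambda else if dvo u == dvo v then a' else 0)).
pose Bm : 'M[R]_(t * p, \sum_(w < t * p) pm t p m w) :=
  mxrow (fun w : 'I_(t * p) =>
    \matrix_(u < t * p, x < pm t p m w) (if dvo u == dvo w then b else 0)).
pose Cm : 'M[R]_(\sum_(w < t * p) pm t p m w, t * p) :=
  mxcol (fun w : 'I_(t * p) =>
    \matrix_(x < pm t p m w, v < t * p) (if dvo w == dvo v then b else 0)).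
pose Dm : 'M[R]_(\sum_(w < t * p) pm t p m w) :=
  mxdiag (fun w : 'I_(t * p) => (Y (dvo w) - lambda%:M : 'M[R]_(pm t p m w))).
have step2 : \matrix_(i, j) F (fvert i) (fvert j) = block_mx P Bm Cm Dm.
  apply/matrixP => s1 s2; rewrite mxE /fvert.
  case: (split_ordP s1) => u1 ->; case: (split_ordP s2) => u2 ->.
  - rewrite block_mxEul /P mxE /F.
    case: (eqVneq u1 u2) => [<-|ne].
      by rewrite !adj_diag eqxx mul1r sub0r ?add0r.
    have -> : (inl u1 == inl u2 :> corona_vertex t p m) = false.
      by apply/negbTE; apply: contra ne => /eqP [->].
    rewrite /Ec adj_LL // mul0r subr0 !natrD !natrM natrB; last first.
      by apply: binm2_mono; lia.
    by rewrite /a'; case: (dvo u1 == dvo u2); rewrite ?mul1r ?mul0r ?addr0.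
  - rewrite block_mxEur /Bm mxE mxE /F /Ec adj_LR /= mul0r subr0 natrM.
    by case: (_ == _); rewrite ?mul1r ?mul0r.
  - rewrite block_mxEdl /Cm mxE mxE /F /Ec adj_sym adj_LR /= mul0r subr0 natrM.
    by rewrite eq_sym; case: (_ == _); rewrite ?mul1r ?mul0r.
  - rewrite block_mxEdr /Dm /mxdiag mxE /F /Ec adj_RR.
    case: (eqVneq (tagnat.sig1 u1) (tagnat.sig1 u2)) => [e|ne].
      have hd : dvo (tagnat.sig1 u1) = dvo (tagnat.sig1 u2) by rewrite e.
      have hm' : mdo (tagnat.sig1 u1) = mdo (tagnat.sig1 u2) by rewrite e.
      rewrite hd hm' !eqxx /= conform_mx_id /Y !mxE -hd.
      rewrite (inj_eq (@inr_inj _ _)) !xpair_eqE !eqxx /=.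
      case: (eqVneq (tagnat.sig2 u1) (tagnat.sig2 u2)) => [ex|nx].
        by rewrite ex adj_diag mul1r subrr mulr0 addr0 sub0r.
      rewrite mul0r subr0 mulr0n subr0 subr0 mulr1 natrD natrB //.
      by apply: binm2_mono; lia.
    have hne : ((dvo (tagnat.sig1 u1) == dvo (tagnat.sig1 u2)) &&
        (mdo (tagnat.sig1 u1) == mdo (tagnat.sig1 u2))) = false.
      apply/negbTE/negP => /andP [/eqP h1 /eqP h2].
      by move/negP: ne; apply; apply/eqP; apply: dvo_mdo_inj.
    rewrite (inj_eq (@inr_inj _ _)) !xpair_eqE hne /= mxE.
    by rewrite mul0r subr0.

rewrite step2.
have hs0 : forall i x, \sum_y (Y i - lambda%:M) x y = s0 - lambda.
  by move=> i x; rewrite /Y /s0; apply: rowsum_Y; [exact: hG | exact: hGkr].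
have DC : Dm *m Cm = (s0 - lambda) *: Cm.
  rewrite /Dm /Cm mul_mxdiag_mxcol; apply/matrixP => s v; rewrite !mxE.
  rewrite -(hs0 (dvo (tagnat.sig1 s)) (tagnat.sig2 s)) mulr_suml.
  by apply: eq_bigr => j _; rewrite !mxE.
have hZ : Cm + Dm *m (- (s0 - lambda)^-1 *: Cm) = 0.
  case: (eqVneq (s0 - lambda) 0) => h0; last first.
    by rewrite -scalemxAr DC scalerA mulNr mulVf // scaleN1r subrr.
  suff -> : Cm = 0 by rewrite scaler0 mulmx0 addr0.
  apply/matrixP => s v; exfalso.
  have hu := hY (dvo v).
  have h1 : (Y (dvo v) - lambda%:M) *m (const_mx 1 : 'cV[R]_m) = 0.
    apply/matrixP => x j; rewrite [LHS]mxE.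
    under eq_bigr => y _ do rewrite [const_mx 1 _ _]mxE mulr1.
    by rewrite hs0 h0 mxE.
  have := mulKmx hu (const_mx 1 : 'cV[R]_m); rewrite h1 mulmx0.
  move=> /matrixP /(_ (Ordinal (ltnW hm)) ord0); rewrite !mxE => /eqP.
  by rewrite eq_sym oner_eq0.
rewrite (det_schur _ _ hZ).
have hD : \det Dm = (\prod_(i < t) \det (Y i - lambda%:M)) ^+ p.
  rewrite /Dm det_mxdiag (partition_big (@dvo t p) predT) //= -prodrXl.
  apply: eq_bigr => i _.
  rewrite (eq_bigr (fun=> \det (Y i - lambda%:M))); last by move=> w /eqP ->.
  rewrite prodr_const; congr (_ ^+ _).
  rewrite -[RHS](card_block p i); apply: eq_card => w; rewrite !inE.
  by [].
rewrite hD mulrC; congr (_ * _); congr (\det _).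
have BC : forall u v, (Bm *m Cm) u v = (dvo u == dvo v)%:R * (b ^+ 2 * p%:R * m%:R).
  move=> u v; rewrite /Bm /Cm mul_mxrow_mxcol summxE.
  under eq_bigr => w _ do rewrite mxE.
  under eq_bigr => w _ do under eq_bigr => x _ do rewrite !mxE.
  under eq_bigr => w _ do rewrite sumr_const card_ord /pm.
  rewrite (eq_bigr (fun w => if dvo w == dvo u then
                     (dvo u == dvo v)%:R * b ^+ 2 *+ m else 0)); last first.
    move=> w _; case: (eqVneq (dvo w) (dvo u)) => [->|ne].
      by case: (dvo u == dvo v); rewrite ?mul1r ?mul0r ?mulr0 ?expr2.
    by rewrite mul0r mul0rn.
  rewrite -big_mkcond sumr_const.
  have -> : #|[pred w : 'I_(t * p) | dvo w == dvo u]| = p.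
    by rewrite -[RHS](card_block p (dvo u)); apply: eq_card => w; rewrite !inE.
  rewrite -!mulrnAr; congr (_ * _).
  by rewrite -mulrnA -[b *+ _]mulr_natr natrM expr2 -!mulrA [m%:R * _]mulrC.
apply/matrixP => u v.
rewrite -scalemxAr [LHS]mxE [X in _ + X = _]mxE BC /P mxE.
rewrite [RHS]mxE /adjmx_ord mxE /tensmx mxE !mxE.
rewrite -[(mxtens_unindex u).1]/(dvo u) -[(mxtens_unindex v).1]/(dvo v).
rewrite -[(mxtens_unindex u).2]/(mdo u) -[(mxtens_unindex v).2]/(mdo v) mulr1 /s0.
case: (eqVneq u v) => [<-|ne].
  rewrite !eqxx adj_diag /=.
  move: (r%:R * (k%:R - 1) + c * (m%:R - 1) - lambda) => S.
  rewrite /= ?mul1r ?mulr1 ?add0r ?sub0r; ring.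
case: (eqVneq (dvo u) (dvo v)) => [ed|nd]; last first.
  by rewrite /= !mul0r mulr0 addr0.
have nm : mdo u != mdo v.
  by apply: contra ne => /eqP em; apply/eqP; apply: dvo_mdo_inj.
have p2 : (1 < p)%N.
  move: nm; case: (mdo u) => [x hx]; case: (mdo v) => [y hy]; rewrite -val_eqE /= => nxy.
  lia.
rewrite /a p2 (negbTE nm) /a'.
move: (r%:R * (k%:R - 1) + c * (m%:R - 1) - lambda) => S.
rewrite /= ?mul1r ?mulr0 ?subr0; ring.
Qed.
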